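(* Let $G$ be a finite non-cyclic $p$-group having no subgroup isomorphic to a generalized quaternion group $Q_{2^n}$. Suppose that either (i) the derived subgroup $G'$ is non-cyclic, or (ii) there exists $g\in G$ with $o(g)>p$ and $\langle g\rangle\cap G'=\{e\}$. Then $E(\mathcal{P}_e(G))\subsetneq E(\Delta_D(G))$.
   Context: The enhanced power graph $\mathcal{P}_e(G)$ of a group $G$ has vertex set $G$, with distinct $x,y$ adjacent iff $\langle x,y\rangle$ is cyclic; $E(\cdot)$ denotes the edge set. For a finite group $G$ with Schur multiplier $M(G)$, a Schur cover is a group $\tilde G$ with central extension $\{e\}\to M(G)\xrightarrow{\iota}\tilde G\xrightarrow{\pi}G\to\{e\}$, $\iota(M(G))\subseteq Z(\tilde G)\cap[\tilde G,\tilde G]$, of maximal order. The deep commuting graph $\Delta_D(G)$ has vertex set $G$, distinct vertices adjacent iff their preimages under $\pi$ commute in $\tilde G$. $Q_{2^n}=\langle a,b\mid a^{2^{n-1}}=e,\ b^2=a^{2^{n-2}},\ ab=ba^{-1}\rangle$. *)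

(* Defs.v *)
From HB Require Import structures.
From mathcomp Require Import all_boot all_fingroup all_solvable.
Set Implicit Arguments.
Unset Strict Implicit.
Unset Printing Implicit Defensive.
Local Open Scope group_scope.

Definition no_gen_quaternion_subgroup (gT : finGroupType) (G : {group gT}) :=
  forall (n : nat) (H : {group gT}), 3 <= n -> H \subset G -> ~ (H \isog 'Q_(2 ^ n)).

(* Edge set of the enhanced power graph of G: unordered pairs {x,y} of
   distinct elements with <x,y> cyclic. *)
Definition epg_edges (gT : finGroupType) (G : {set gT}) : {set {set gT}} :=
  [set [set x; y] | x in G, y in G & (x != y) && cyclic <<[set x; y]>>].

Definition stem_extension (gT hT : finGroupType) (H : {group hT})
    (pi : {morphism H >-> gT}) (G : {group gT}) : bool :=
  (pi @* H == G) && ('ker pi \subset 'Z(H) :&: H^`(1)).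

Definition schur_cover (gT hT : finGroupType) (H : {group hT})
    (pi : {morphism H >-> gT}) (G : {group gT}) : Prop :=
  stem_extension pi G /\
  forall (kT : finGroupType) (K : {group kT}) (phi : {morphism K >-> gT}),
    stem_extension phi G -> #|K| <= #|H|.

Definition deep_adj (gT hT : finGroupType) (H : {group hT})
    (pi : {morphism H >-> gT}) (x y : gT) : bool :=
  [forall a in H, forall b in H, (pi a == x) && (pi b == y) ==> (a * b == b * a)].

Definition deep_edges (gT hT : finGroupType) (H : {group hT})
    (pi : {morphism H >-> gT}) (G : {set gT}) : {set {set gT}} :=
  [set [set x; y] | x in G, y in G & (x != y) && deep_adj pi x y].

(* Main.v *)
Require Import Defs.
From HB Require Import structures.
From mathcomp Require Import all_boot all_fingroup all_solvable.
Set Implicit Arguments.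
Unset Strict Implicit.
Unset Printing Implicit Defensive.
Local Open Scope group_scope.

Section Deep.
Variables (gT hT : finGroupType) (H : {group hT}) (pi : {morphism H >-> gT})
  (G : {group gT}).
Hypothesis st : stem_extension pi G.

Lemma st_im : pi @* H = G.
Proof. by case/andP: st => /eqP. Qed.

Lemma st_kerZ m : m \in 'ker pi -> m \in 'Z(H).
Proof.
case/andP: st => _ /subsetP sK km.
by have := sK m km; rewrite inE => /andP[].
Qed.

Lemma st_central m u : m \in 'ker pi -> u \in H -> commute m u.
Proof.
move=> /st_kerZ /centerP [_ cm] uH; exact: (cm u uH).
Qed.

Lemma st_pre x : x \in G -> exists2 a, a \in H & pi a = x.
Proof.
rewrite -st_im => /morphimP [a aH _ ->]; by exists a.
Qed.

Lemma deep_witness x y a0 b0 : a0 \in H -> b0 \in H -> pi a0 = x -> pi b0 = y ->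
  commute a0 b0 -> deep_adj pi x y.
Proof.
move=> a0H b0H pa pb cab.
apply/forallP => a; apply/implyP => aH; apply/forallP => b; apply/implyP => bH.
apply/implyP => /andP [/eqP pax /eqP pby]; apply/eqP.
have ma : a * a0^-1 \in 'ker pi.
  by apply/kerP; rewrite ?groupM ?groupV // morphM ?groupV // morphV // pax pa mulgV.
have mb : b * b0^-1 \in 'ker pi.
  by apply/kerP; rewrite ?groupM ?groupV // morphM ?groupV // morphV // pby pb mulgV.
have ea : a = (a * a0^-1) * a0 by rewrite mulgKV.
have eb : b = (b * b0^-1) * b0 by rewrite mulgKV.
have Hm1 : a * a0^-1 \in H by rewrite groupM ?groupV.
have Hm2 : b * b0^-1 \in H by rewrite groupM ?groupV.
rewrite ea eb.
have c : commute ((a * a0^-1) * a0) ((b * b0^-1) * b0).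
  apply: commuteM; apply: commute_sym; apply: commuteM.
  - by apply: st_central.
  - by apply: st_central.
  - exact: (commute_sym (st_central ma b0H)).
  - exact: commute_sym.
exact: c.
Qed.

Lemma deep_cyclic x y : x \in G -> y \in G -> cyclic <<[set x; y]>> -> deep_adj pi x y.
Proof.
move=> xG yG /cyclicP [w ew].
have sG : <<[set x; y]>> \subset G by rewrite gen_subG subUset !sub1set xG yG.
have wG : w \in G by move: sG; rewrite ew cycle_subG.
have : x \in <[w]> by rewrite -ew mem_gen // !inE eqxx.
case/cycleP => i ->.
have : y \in <[w]> by rewrite -ew mem_gen // !inE eqxx orbT.
case/cycleP => j ->.
have [c cH pc] := st_pre wG.
apply: (@deep_witness _ _ (c ^+ i) (c ^+ j)); rewrite ?groupX ?morphX ?pc //.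
exact: commuteX2.
Qed.

Lemma comm_ker a c : a \in H -> c \in H -> pi c \in 'Z(G) -> [~ a, c] \in 'ker pi.
Proof.
move=> aH cH /centerP [_ cz].
apply/kerP; first by rewrite groupR.
rewrite morphR //; apply/eqP/commgP; apply: commute_sym; apply: cz.
by rewrite -st_im mem_morphim.
Qed.

Lemma comm_pow a c q : a \in H -> c \in H -> pi c \in 'Z(G) -> pi c ^+ q = 1 ->
  commute (a ^+ q) c.
Proof.
move=> aH cH cz cq.
have k := comm_ker aH cH cz.
have kH : [~ a, c] \in H by rewrite groupR.
have cq1 : c ^+ q \in 'ker pi by apply/kerP; rewrite ?groupX // morphX.
apply/commgP; rewrite commXg; last by apply: commute_sym; apply: st_central.
rewrite -commgX; last by apply: commute_sym; apply: st_central.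
apply/commgP; apply: commute_sym; apply: st_central => //.
Qed.

Lemma comm_der a c : a \in H^`(1) -> c \in H -> pi c \in 'Z(G) -> commute a c.
Proof.
move=> aH cH cz.
have sKH : [~: H, <[c]>] \subset H.
  have cs : <[c]> \subset H by rewrite cycle_subG.
  apply: subset_trans (commgS H cs) _.
  exact: (der_sub 1 H).
have sK : [~: H, <[c]>] \subset 'ker pi.
  rewrite ker_trivg_morphim sKH /=.
  rewrite morphimR ?cycle_subG // morphim_cycle // st_im.
  rewrite subG1; apply/eqP/commG1P; rewrite cent_cycle; apply/subsetP => u uG; apply/cent1P.
  by apply: commute_sym; move/centerP: cz => [_ cz]; apply: cz.
have sZ : [~: H, <[c]>] \subset 'C(H).
  apply/subsetP => m /(subsetP sK) /st_kerZ; rewrite inE => /andP[]//.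
have t1 : [~: H, <[c]>, H] = 1 by apply/commG1P.
have t2 : [~: <[c]>, H, H] = 1 by rewrite (commGC <[c]>); apply/commG1P.
have t3 := three_subgroup t1 t2.
have s3 : [~: H, H] \subset 'C(<[c]>) by apply/commG1P.
have : a \in 'C(<[c]>) by apply: (subsetP s3); rewrite -derg1.
by rewrite cent_cycle => /cent1P.
Qed.
End Deep.
Section Grp.
Variables (gT : finGroupType) (p : nat).

Lemma NC (G : {group gT}) x z : p.-group G -> x \in G -> x != 1 -> #[z] = p ->
  z \notin <[x]> -> ~~ cyclic <<[set x; z]>>.
Proof.
move=> pG xG nx oz zx; apply/negP => cyc.
have pX : p.-group <[x]> by apply: pgroupS pG; rewrite cycle_subG.
have ntX : <[x]> != 1 by rewrite cycle_eq1.
have [pr pd _] := pgroup_pdiv pX ntX.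
have [y yX oy] := Cauchy pr pd.
have s1 : <[y]> \subset <<[set x; z]>>.
  apply: subset_trans (_ : <[x]> \subset _); first by rewrite cycle_subG.
  by rewrite cycle_subG mem_gen // !inE eqxx.
have s2 : <[z]> \subset <<[set x; z]>>.
  by rewrite cycle_subG mem_gen // !inE eqxx orbT.
have := eq_subG_cyclic cyc s1 s2.
rewrite -!orderE oy oz eqxx => /eqP eyz.
by move: zx; rewrite -eyz in s2 *; rewrite -(cycle_subG z) -eyz cycle_subG yX.
Qed.

Lemma two_p (K : {group gT}) z : p.-group K -> ~~ cyclic K ->
  (forall n, 2 < n -> ~ (K \isog 'Q_(2 ^ n))) -> z \in K -> #[z] = p ->
  exists2 x, x \in K & (#[x] = p /\ x \notin <[z]>).
Proof.
move=> pK ncK nQ zK oz.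
have ntK : K :!=: 1 by apply: contraNneq ncK => ->; exact: cyclic1.
have [pr _ _] := pgroup_pdiv pK ntK.
case: (boolP [exists x in K, (#[x] == p) && (x \notin <[z]>)]).
  by case/exists_inP => x xK /andP [/eqP ox nx]; exists x.
move/exists_inP => nex.
have eO : 'Ohm_1(K) = <[z]>.
  apply/eqP; rewrite eqEsubset; apply/andP; split.
    rewrite (OhmE 1 pK) gen_subG; apply/subsetP => x; rewrite !inE expn1.
    case/andP => xK xp.
    have : #[x] %| p by rewrite order_dvdn.
    have [_ hp] := primeP pr.
    move=> /hp /pred2P [ox | ox].
      by move/eqP: ox; rewrite order_eq1 => /eqP ->; exact: group1.
    by apply/negPn/negP => nz; apply: nex; exists x => //; rewrite ox eqxx.
  by rewrite cycle_subG /= (OhmE 1 pK) mem_gen // !inE zK /= expn1 -{1}oz expg_order.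
have : #|'Ohm_1(K)| = p by rewrite eO -orderE.
move/(prime_Ohm1P pK ntK); rewrite (negbTE ncK) /=.
case/andP => _ /eqP /quaternion_classP [n n2 iso].
by case: (nQ n n2 iso).
Qed.
End Grp.

Lemma central_p (gT : finGroupType) (G : {group gT}) (p : nat) : p.-group G -> G^`(1) != 1 ->
  exists2 z, z \in G^`(1) :&: 'Z(G) & #[z] = p.
Proof.
move=> pG nt.
have ne : G^`(1) :&: 'Z(G) != 1.
  apply: contraNneq nt => e.
  by rewrite (TI_center_nil (pgroup_nil pG) (der_normal 1 G) e).
have pI : p.-group (G^`(1) :&: 'Z(G)).
  by apply: pgroupS pG; apply: subset_trans (subsetIl _ _) (der_sub 1 G).
have [pr pd _] := pgroup_pdiv pI ne.
have [z zI oz] := Cauchy pr pd.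
by exists z.
Qed.

Lemma strict_pair (gT hT : finGroupType) (H : {group hT}) (pi : {morphism H >-> gT})
  (G : {group gT}) x z : x \in G -> z \in G -> deep_adj pi x z ->
  ~~ cyclic <<[set x; z]>> ->
  (epg_edges G \subset deep_edges pi G) -> epg_edges G \proper deep_edges pi G.
Proof.
move=> xG zG dxz nc sub; rewrite properE sub /=.
have nxz : x != z.
  by apply: contraNneq nc => ->; rewrite setUid -[<<[set z]>>]/(<[z]>) cycle_cyclic.
apply/negP => sub2.
have : [set x; z] \in deep_edges pi G.
  by apply/imset2P; exists x z => //; rewrite inE zG nxz dxz.
move/(subsetP sub2)/imset2P => [x' y' _]; rewrite inE => /andP [_ /andP [_ cyc]] e.
by move: nc; rewrite e cyc.
Qed.

Theorem proposition3p14 (gT : finGroupType) (G : {group gT}) (p : nat) :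
  prime p -> p.-group G -> ~~ cyclic G ->
  no_gen_quaternion_subgroup G ->
  (~~ cyclic G^`(1) \/
   exists2 g, g \in G & (p < #[g])%N /\ <[g]> :&: G^`(1) = 1) ->
  forall (hT : finGroupType) (H : {group hT}) (pi : {morphism H >-> gT}),
    schur_cover pi G ->
    epg_edges G \proper deep_edges pi G.
Proof.
move=> pr pG ncG nQ hyp hT H pi [st _].
have sub : epg_edges G \subset deep_edges pi G.
  apply/subsetP => e /imset2P [x y xG]; rewrite inE => /andP [yG /andP [nxy cyc]] ->.
  by apply/imset2P; exists x y => //; rewrite inE yG nxy (deep_cyclic st).
case: hyp => [ncD | [g gG [og gD]]].
  have ntD : G^`(1) != 1 by apply: contraNneq ncD => ->; exact: cyclic1.
  have [z /setIP [zD zZ] oz] := central_p pG ntD.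
  have pD : p.-group G^`(1) by apply: pgroupS pG; exact: der_sub.
  have nQD : forall n, 2 < n -> ~ (G^`(1) \isog 'Q_(2 ^ n)).
    by move=> n n2; apply: nQ => //; exact: der_sub.
  have [x xD [ox xz]] := two_p pD ncD nQD zD oz.
  have sDG : G^`(1) \subset G := der_sub 1 G.
  have zG : z \in G := subsetP sDG z zD.
  have xG : x \in G := subsetP sDG x xD.
  apply: (strict_pair (x := z) (z := x)) => //.
    have [c cH pc] := st_pre st zG.
    have : x \in pi @* H^`(1) by rewrite morphim_der // (st_im st).
    case/morphimP => a aH aD ->.
    apply: (deep_witness st cH aH pc erefl).
    by apply: commute_sym; apply: (comm_der st aD cH); rewrite pc.
  apply: (NC pG zG) => //.
  by rewrite -order_eq1 oz; case: (p) pr => [|[]].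
have p0 : 0 < p := prime_gt0 pr.
have ng1 : g != 1.
  by apply: contraTneq og => ->; rewrite order1 -leqNgt.
have [z zZ [oz zg]] : exists2 z, z \in 'Z(G) & (#[z] = p /\ z \notin <[g]>).
  have [D1 | ntD] := eqVneq G^`(1) 1.
    have abG : abelian G by apply/commG1P; rewrite -derg1 D1.
    have pX : p.-group <[g]> by apply: pgroupS pG; rewrite cycle_subG.
    have ntX : <[g]> != 1 by rewrite cycle_eq1.
    have [_ pd _] := pgroup_pdiv pX ntX.
    have [y yX oy] := Cauchy pr pd.
    have yG : y \in G by apply: (subsetP _ y yX); rewrite cycle_subG.
    have nQG : forall n, 2 < n -> ~ (G \isog 'Q_(2 ^ n)).
      by move=> n n2; apply: nQ.
    have [x xG [ox xy]] := two_p pG ncG nQG yG oy.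
    exists x; first by rewrite (center_idP abG).
    split => //; apply/negP => xg.
    have s1 : <[x]> \subset <[g]> by rewrite cycle_subG.
    have s2 : <[y]> \subset <[g]> by rewrite cycle_subG.
    have := eq_subG_cyclic (cycle_cyclic g) s1 s2.
    rewrite -!orderE ox oy eqxx => /eqP exy.
    by move: xy; rewrite -exy cycle_id.
  have [z /setIP [zD zZ] oz] := central_p pG ntD.
  exists z => //; split => //; apply/negP => zg.
  have : z \in <[g]> :&: G^`(1) by rewrite inE zg zD.
  rewrite gD inE => /eqP z1.
  by move: oz; rewrite z1 order1 => p1; rewrite -p1 in pr.
have zG : z \in G by move: zZ; rewrite inE => /andP [].
have gpG : g ^+ p \in G by rewrite groupX.
apply: (strict_pair (x := g ^+ p) (z := z)) => //.
  have [a aH pa] := st_pre st gG.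
  have [c cH pc] := st_pre st zG.
  apply: (deep_witness st (groupX p aH) cH _ pc).
    by rewrite morphX // pa.
  by apply: (comm_pow st aH cH); rewrite pc // -oz expg_order.
apply: (NC pG gpG) => //.
  apply/eqP => gp1; move: og; rewrite ltnNge => /negP; apply.
  by apply: dvdn_leq => //; rewrite order_dvdn gp1.
apply: contra zg => zgp.
by apply: (subsetP _ z zgp); rewrite cycle_subG mem_cycle.
Qed.
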